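(* There exist finite graphs $\mathbb{H}_1,\mathbb{H}_2,\dots$ such that (1) $\mathbb{H}_n$ is not 3-colorable for every $n\ge1$; (2) $\mathbb{H}_{n+1}$ maps homomorphically to $\mathbb{H}_n$ for every $n\ge1$; (3) for every non-trivial height 1 condition $\Sigma$ there exists $n\ge1$ such that $\Sigma$ implies $\Sigma_{\mathbb{H}_n}$.
   Context: A graph is a structure $(V,E)$ with a single symmetric binary relation $E$ (loops allowed); it is 3-colorable if it admits a homomorphism to the complete loopless graph on three vertices. A clone on a set $A$ is a set of finitary operations on $A$ containing all projections and closed under composition. A height 1 condition is a finite set of identities $f(x_{\pi(1)},\dots,x_{\pi(n)})\approx g(x_{\rho(1)},\dots,x_{\rho(m)})$ (function symbols, arbitrary maps $\pi,\rho$, universally quantified); a clone satisfies it if its symbols can be assigned functions of the clone of the right arities making all identities true. $\Sigma$ implies $\Sigma'$ if every clone satisfying $\Sigma$ satisfies $\Sigma'$; $\Sigma$ is trivial if it is satisfied in every clone. For a finite graph $\mathbb{G}=(V,E)$, $\Sigma_{\mathbb{G}}$ is the height 1 condition with a ternary symbol $f_v$ for each $v\in V$, a $6$-ary symbol $g_{(u,v)}$ for each $(u,v)\in E$, and, for each $(u,v)\in E$, the identities $f_u(x,y,z)\approx g_{(u,v)}(x,y,x,z,y,z)$ and $f_v(x,y,z)\approx g_{(u,v)}(y,x,z,x,z,y)$. *)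

(* Defs.v *)
From mathcomp Require Import all_boot.
Set Implicit Arguments. Unset Strict Implicit. Unset Printing Implicit Defensive.

Record h1graph := H1Graph {
  gV : finType;
  gE : rel gV;
  gE_sym : symmetric gE }.

Definition graph_hom (G H : h1graph) : Prop :=
  exists h : gV G -> gV H, forall x y, gE x y -> gE (h x) (h y).

Definition K3_rel : rel 'I_3 := fun x y => x != y.
Lemma K3_sym : symmetric K3_rel.
Proof. by move=> x y; rewrite /K3_rel eq_sym. Qed.
Definition K3 : h1graph := H1Graph K3_sym.

Definition three_colorable (G : h1graph) : Prop := graph_hom G K3.

Definition op (A : Type) (n : nat) := ('I_n -> A) -> A.

Record clone (A : Type) := Clone {
  cl_mem : forall n, op A n -> Prop;
  cl_proj : forall n (i : 'I_n), cl_mem (fun x : 'I_n -> A => x i);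
  cl_comp : forall n m (f : op A n) (g : 'I_n -> op A m),
      cl_mem f -> (forall i, cl_mem (g i)) ->
      cl_mem (fun x : 'I_m -> A => f (fun i => g i x)) }.

(* A finite set of function symbols (with arities) and a finite family of
   identities  lf(x_{lpi(1)},...) ~ rf(x_{rpi(1)},...)  in nv variables. *)
Record h1cond := H1cond {
  h1_sym : finType;
  h1_ar : h1_sym -> nat;
  h1_id : finType;
  h1_nv : h1_id -> nat;
  h1_lf : h1_id -> h1_sym;
  h1_lpi : forall i, 'I_(h1_ar (h1_lf i)) -> 'I_(h1_nv i);
  h1_rf : h1_id -> h1_sym;
  h1_rpi : forall i, 'I_(h1_ar (h1_rf i)) -> 'I_(h1_nv i) }.

Definition satisfies (A : Type) (C : clone A) (S : h1cond) : Prop :=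
  exists F : forall s : h1_sym S, op A (h1_ar s),
    (forall s, cl_mem C (F s)) /\
    (forall (i : h1_id S) (x : 'I_(h1_nv i) -> A),
        F (h1_lf i) (fun j => x (h1_lpi j)) = F (h1_rf i) (fun j => x (h1_rpi j))).

Definition h1_implies (S S' : h1cond) : Prop :=
  forall (A : Type) (C : clone A), satisfies C S -> satisfies C S'.

Definition h1_trivial (S : h1cond) : Prop :=
  forall (A : Type) (C : clone A), satisfies C S.

Section SigmaG.
Variable G : h1graph.
Definition edgeT : finType := {e : gV G * gV G | gE e.1 e.2}.
Definition sigG_sym : finType := (gV G + edgeT)%type.
Definition sigG_ar (s : sigG_sym) : nat := if s is inl _ then 3 else 6.
Definition sigG_id : finType := (edgeT * bool)%type.
(* (e, true):  f_u(x,y,z) ~ g_(u,v)(x,y,x,z,y,z)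
   (e, false): f_v(x,y,z) ~ g_(u,v)(y,x,z,x,z,y)   where e = (u,v) *)
Definition sigG_lf (i : sigG_id) : sigG_sym :=
  if i.2 then inl (val i.1).1 else inl (val i.1).2.
Definition sigG_rf (i : sigG_id) : sigG_sym := inr i.1.
Definition sigG_lpi (i : sigG_id) (j : 'I_(sigG_ar (sigG_lf i))) : 'I_3 :=
  inord j.
Definition sigG_rpi (i : sigG_id) (j : 'I_(sigG_ar (sigG_rf i))) : 'I_3 :=
  inord (nth 0 (if i.2 then [:: 0; 1; 0; 2; 1; 2] else [:: 1; 0; 2; 0; 2; 1]) j).
Definition SigmaG : h1cond :=
  @H1cond sigG_sym sigG_ar sigG_id (fun _ => 3) sigG_lf sigG_lpi sigG_rf sigG_rpi.
End SigmaG.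

(* Main.v *)
Require Import Defs.
From mathcomp Require Import all_boot boolp.
From Stdlib Require Import FunctionalExtensionality.
Set Implicit Arguments. Unset Strict Implicit. Unset Printing Implicit Defensive.

Definition O0 : 'I_3 := @Ordinal 3 0 isT.
Definition O1 : 'I_3 := @Ordinal 3 1 isT.
Definition O2 : 'I_3 := @Ordinal 3 2 isT.

Lemma I3E (x : 'I_3) : x = O0 \/ x = O1 \/ x = O2.
Proof. case: x => [[|[|[|x]]] Hx] //; [left|right;left|right;right]; exact: val_inj. Qed.

Ltac i3 x := let H := fresh in have [H|[H|H]] := I3E x; subst x.

Lemma I3_two (c d y z : 'I_3) : c != d -> y != c -> y != d -> z != c -> z != d -> y = z.
Proof. by i3 c; i3 d; i3 y; i3 z. Qed.

Definition nxt (x : 'I_3) : 'I_3 := match val x with 0 => O1 | 1 => O2 | _ => O0 end.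
Lemma nxt1 x : nxt x != x. Proof. by i3 x. Qed.
Lemma nxt2 x : nxt (nxt x) != x. Proof. by i3 x. Qed.

Definition oth (a b : 'I_3) : 'I_3 :=
  if (a != O0) && (b != O0) then O0 else if (a != O1) && (b != O1) then O1 else O2.
Lemma oth1 a b : oth a b != a. Proof. by i3 a; i3 b. Qed.
Lemma oth2 a b : oth a b != b. Proof. by i3 a; i3 b. Qed.

Definition pat (b : bool) (j : 'I_6) : 'I_3 :=
  inord (nth 0 (if b then [:: 0; 1; 0; 2; 1; 2] else [:: 1; 0; 2; 0; 2; 1]) j).

Definition I6 (k : nat) (H : k < 6) : 'I_6 := Ordinal H.

Definition ec (a b : 'I_3) : 'I_6 :=
  match val a, val b with
  | 0, 1 => @I6 0 isT | 1, 0 => @I6 1 isT | 0, 2 => @I6 2 isT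
  | 2, 0 => @I6 3 isT | 1, 2 => @I6 4 isT | _, _ => @I6 5 isT end.

Lemma pat_ec a b : a != b -> pat true (ec a b) = a /\ pat false (ec a b) = b.
Proof.
by i3 a; i3 b => // _; split; apply: val_inj; rewrite /= inordK.
Qed.

Definition swap (j : 'I_6) : 'I_6 :=
  match val j with
  | 0 => @I6 1 isT | 1 => @I6 0 isT | 2 => @I6 3 isT
  | 3 => @I6 2 isT | 4 => @I6 5 isT | _ => @I6 4 isT end.

Lemma pat_swap b j : pat b (swap j) = pat (~~ b) j.
Proof.
case: j => [[|[|[|[|[|[|j]]]]]] Hj] //; case: b; apply: val_inj; rewrite /= !inordK //.
Qed.

Definition cns m (x : 'I_3) (h : 'I_m -> 'I_3) : 'I_m.+1 -> 'I_3 :=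
  fun i => if unlift ord0 i is Some j then h j else x.

Lemma cnsE m (y : 'I_m.+1 -> 'I_3) : cns (y ord0) (fun j => y (lift ord0 j)) = y.
Proof.
apply: functional_extensionality => i; rewrite /cns.
by case: unliftP => [j ->|->].
Qed.

Definition polyK (X : Type) (f : (X -> 'I_3) -> 'I_3) :=
  forall x y, (forall i, x i != y i) -> f x != f y.

Lemma inj_R (u w : 'I_3 -> 'I_3) : injective u ->
  (forall x x', x != x' -> u x != w x') -> forall x, w x = u x.
Proof.
move=> iu R x'; have [g ug gu] := injF_bij iu.
case: (eqVneq (g (w x')) x') => [e|ne]; first by rewrite -{2}e gu.
by have := R _ _ ne; rewrite gu eqxx.
Qed.

Lemma polyK3 m (f : ('I_m -> 'I_3) -> 'I_3) : polyK f ->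
  exists k : 'I_m, exists p : 'I_3 -> 'I_3, forall x, f x = p (x k).
Proof.
elim: m f => [|m IH] f Pf.
  have := Pf (fun _ => O0) (fun _ => O0) (fun i => match i with Ordinal _ H => False_ind _ (notF H) end).
  by rewrite eqxx.
pose u h x := f (cns x h).
have R : forall h h', (forall j, h j != h' j) -> forall x x', x != x' -> u h x != u h' x'.
  move=> h h' hh' x x' xx'; apply: Pf => i; rewrite /cns; case: unlift => //.
case: (pselect (exists h0, injective (u h0))) => [[h0 ih0]|noinj].
  have E : forall h x, u h x = u h0 x.
    move=> h x; pose c j := oth (h0 j) (h j).
    have Hc1 : forall j, h0 j != c j by move=> j; rewrite eq_sym oth1.
    have Hc2 : forall j, c j != h j by move=> j; rewrite oth2.
    have E1 := inj_R ih0 (R h0 c Hc1).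
    have ic : injective (u c) by move=> a b; rewrite !E1; exact: ih0.
    have E2 := inj_R ic (R c h Hc2).
    by rewrite E2 E1.
  exists ord0, (u h0) => y; by rewrite -(E (fun j => y (lift ord0 j))) /u cnsE.
have cst : forall h x x', u h x = u h x'.
  move=> h x x'; apply/eqP/negP => /negP ne.
  have [i [j [ij uij]]] : exists i j, i != j /\ u h i = u h j.
    case: (pselect (exists i j, i != j /\ u h i = u h j)) => [//|H]; exfalso.
    apply: noinj; exists h => a b ab; case: (eqVneq a b) => // nab.
    by exfalso; apply: H; exists a, b; split.
  have [z zc] : exists z, u h z != u h i.
    case: (eqVneq (u h x) (u h i)) => [e|]; last by exists x.
    by exists x'; rewrite -e eq_sym.
  have zi : z != i by apply: contraNneq zc => ->.
  have zj : z != j by apply: contraNneq zc => ->; rewrite uij.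
  pose h1 k := nxt (h k); pose h2 k := nxt (nxt (h k)).
  have R01 : forall k, h k != h1 k by move=> k; rewrite eq_sym nxt1.
  have R02 : forall k, h k != h2 k by move=> k; rewrite eq_sym nxt2.
  have R12 : forall k, h1 k != h2 k by move=> k; rewrite eq_sym nxt1.
  have ji : j != i by rewrite eq_sym.
  have a1 := R h h1 R01 j i ji.
  have a2 := R h h1 R01 z i zi.
  have b1 := R h h2 R02 i j ij.
  have b2 := R h h2 R02 z j zj.
  have ab := R h1 h2 R12 i j ij.
  have e : u h1 i = u h2 j.
    apply: (I3_two (c:=u h i) (d:=u h z)).
    - by rewrite eq_sym.
    - by rewrite eq_sym uij.
    - by rewrite eq_sym.
    - by rewrite eq_sym.
    - by rewrite eq_sym.
  by rewrite e eqxx in ab.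
pose g h := u h O0.
have Pg : polyK g.
  move=> h h' hh'; rewrite /g (cst h' O0 O1); exact: R.
have [k [p Hp]] := IH g Pg.
exists (lift ord0 k), p => y.
by rewrite -{1}(cnsE y) -/(u _ _) (cst _ _ O0) -/(g _) Hp.
Qed.

Record minion := Minion {
  mc : nat -> finType;
  mnr : forall n m, mc n -> ('I_n -> 'I_m) -> mc m;
  mnr_comp : forall n m k (a : mc n) (s : 'I_n -> 'I_m) (t : 'I_m -> 'I_k),
      mnr (mnr a s) t = mnr a (fun i => t (s i)) }.
Arguments mnr {_ _ _}.

Section T.
Variable M : minion.
Definition Trel : rel (mc M 3) := fun u v =>
  `[< exists e : mc M 6, u = mnr e (pat true) /\ v = mnr e (pat false) >].
Lemma Trel_sym : symmetric Trel.
Proof.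
have H : forall u v, Trel u v -> Trel v u.
  move=> u v /asboolP [e [-> ->]]; apply/asboolP; exists (mnr e swap).
  rewrite !mnr_comp; split; congr mnr; apply: functional_extensionality => j;
  by rewrite pat_swap.
by move=> u v; apply/idP/idP; apply: H.
Qed.
Definition Tgraph : h1graph := H1Graph Trel_sym.

Definition toP := exists xi : forall n, mc M n -> 'I_n,
  forall n m (a : mc M n) (s : 'I_n -> 'I_m), xi m (mnr a s) = s (xi n a).

Lemma T_col : three_colorable Tgraph -> toP.
Proof.
move=> [c Hc].
have P : forall n (a : mc M n), polyK (fun x => c (mnr a x)).
  move=> n a x y xy; apply: (Hc _ _); apply/asboolP.
  exists (mnr a (fun i => ec (x i) (y i))); rewrite !mnr_comp.
  by split; congr mnr; apply: functional_extensionality => i; have [e1 e2] := pat_ec (xy i); rewrite ?e1 ?e2.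
pose xi n a := projT1 (cid (polyK3 (P n a))).
exists xi => n m a s.
rewrite /xi; case: cid => k [p Hp]; case: cid => k' [p' Hp'] /=.
have E : forall x : 'I_m -> 'I_3, p (x k) = p' (x (s k')).
  by move=> x; rewrite -Hp mnr_comp Hp'.
have pinj : p O0 != p O1.
  have := P m (mnr a s) (fun _ => O0) (fun _ => O1) (fun _ => isT).
  by rewrite !Hp.
case: (eqVneq k (s k')) => // ne.
have e1 := E (fun i => if i == k then O1 else O0); have e0 := E (fun _ => O0).
rewrite /= eqxx eq_sym (negbTE ne) -e0 in e1.
by rewrite e1 eqxx in pinj.
Qed.
End T.

Section Prod.
Variables M N : minion.
Definition pmnr n m (a : (mc M n * mc N n)%type) (s : 'I_n -> 'I_m) : (mc M m * mc N m)%type :=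
  (mnr a.1 s, mnr a.2 s).
Lemma pmnr_comp n m k (a : (mc M n * mc N n)%type) (s : 'I_n -> 'I_m) (t : 'I_m -> 'I_k) :
  pmnr (pmnr a s) t = pmnr a (fun i => t (s i)).
Proof. by rewrite /pmnr /= !mnr_comp. Qed.
Definition prodM : minion := @Minion (fun n => (mc M n * mc N n)%type) pmnr pmnr_comp.

Lemma T_fst : graph_hom (Tgraph prodM) (Tgraph M).
Proof.
exists (fun u => u.1) => u v /asboolP [e [-> ->]]; apply/asboolP; by exists e.1.
Qed.
Lemma T_snd : graph_hom (Tgraph prodM) (Tgraph N).
Proof.
exists (fun u => u.2) => u v /asboolP [e [-> ->]]; apply/asboolP; by exists e.2.
Qed.
End Prod.

Definition sumf n n' m m' (s : 'I_n -> 'I_n') (t : 'I_m -> 'I_m') (k : 'I_(n + m)) : 'I_(n' + m') :=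
  match split k with inl i => lshift m' (s i) | inr j => rshift n' (t j) end.

Lemma splitL n m (i : 'I_n) : split (lshift m i) = inl i.
Proof. exact: (unsplitK (inl i)). Qed.
Lemma splitR n m (j : 'I_m) : split (rshift n j) = inr j.
Proof. exact: (unsplitK (inr j)). Qed.
Lemma sumfL n n' m m' (s : 'I_n -> 'I_n') (t : 'I_m -> 'I_m') i :
  sumf s t (lshift m i) = lshift m' (s i).
Proof. by rewrite /sumf splitL. Qed.
Lemma sumfR n n' m m' (s : 'I_n -> 'I_n') (t : 'I_m -> 'I_m') j :
  sumf s t (rshift n j) = rshift n' (t j).
Proof. by rewrite /sumf splitR. Qed.

Definition CNT (N : minion) := exists n0 (b0 : mc N n0),
  forall (Q : forall n, mc N n -> Prop) (zeta : forall n, mc N n -> option 'I_n),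
  (forall n m (b : mc N n) (t : 'I_n -> 'I_m), Q n b -> Q m (mnr b t)) ->
  (forall n m (b : mc N n) (t : 'I_n -> 'I_m), Q m (mnr b t) -> Q n b) ->
  Q n0 b0 ->
  (forall n m (b : mc N n) (t : 'I_n -> 'I_m), Q n b ->
     exists i, zeta n b = Some i /\ zeta m (mnr b t) = Some (t i)) -> False.

Lemma CNT_notP N : CNT N -> ~ toP N.
Proof.
move=> [n0 [b0 H]] [xi Hxi]; apply: (H (fun _ _ => True) (fun n b => Some (xi n b))) => //.
by move=> n m b t _; exists (xi n b); rewrite Hxi.
Qed.

Lemma bin M N : toP (prodM M N) -> CNT N -> toP M.
Proof.
move=> [xi Hxi] [n0 [b0 HC]].
pose pairL n (a : mc M n) : mc (prodM M N) (n + n0) := (mnr a (@lshift _ n0), mnr b0 (@rshift n _)).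
have pLm : forall n m (a : mc M n) (s : 'I_n -> 'I_m),
    pairL m (mnr a s) = mnr (pairL n a) (sumf s (fun j => j)).
  move=> n m a s; rewrite /pairL /= /pmnr /= !mnr_comp.
  by congr pair; congr mnr; apply: functional_extensionality => i; rewrite ?sumfL ?sumfR.
case: (pselect (forall n (a : mc M n), exists i, xi _ (pairL n a) = lshift n0 i)) => [H|H].
  exists (fun n a => projT1 (cid (H n a))) => n m a s.
  case: cid => i Hi; case: cid => i' Hi' /=.
  have := Hxi _ _ (pairL n a) (sumf s (fun j => j)).
  rewrite -pLm Hi Hi' sumfL => /(congr1 (@split _ _)); rewrite !splitL; by case.
have [n [a0 Ha0]] : exists n (a0 : mc M n), forall i, xi _ (pairL n a0) != lshift n0 i.
  case: (pselect (exists n (a0 : mc M n), forall i, xi _ (pairL n a0) != lshift n0 i)) => // H'.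
  exfalso; apply: H => n a; case: (pselect (exists i, xi _ (pairL n a) = lshift n0 i)) => // H''.
  by exfalso; apply: H'; exists n, a => i; apply/eqP => e; apply: H''; exists i.
pose pairR m (b : mc N m) : mc (prodM M N) (n + m) := (mnr a0 (@lshift _ m), mnr b (@rshift n _)).
have pRm : forall m k (b : mc N m) (t : 'I_m -> 'I_k),
    pairR k (mnr b t) = mnr (pairR m b) (sumf (fun j => j) t).
  move=> m k b t; rewrite /pairR /= /pmnr /= !mnr_comp.
  by congr pair; congr mnr; apply: functional_extensionality => i; rewrite ?sumfL ?sumfR.
pose Q m (b : mc N m) := exists j, xi _ (pairR m b) = rshift n j.
pose zeta m (b : mc N m) := match split (xi _ (pairR m b)) with inl _ => None | inr j => Some j end.
have fwd : forall m k (b : mc N m) (t : 'I_m -> 'I_k), forall j,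
    xi _ (pairR m b) = rshift n j -> xi _ (pairR k (mnr b t)) = rshift n (t j).
  by move=> m k b t j e; rewrite pRm Hxi e sumfR.
exfalso; apply: (HC Q zeta).
- by move=> m k b t [j e]; exists (t j); apply: fwd.
- move=> m k b t [j e]; rewrite /Q.
  case E: (split (xi _ (pairR m b))) => [i|j']; last first.
    by exists j'; rewrite -(splitK (xi _ (pairR m b))) E.
  move: e; rewrite pRm Hxi -(splitK (xi _ (pairR m b))) E /= sumfL.
  by move/(congr1 (@split _ _)); rewrite splitL splitR.
- rewrite /Q; case E: (split (xi _ (pairR n0 b0))) => [i|j]; last first.
    by exists j; rewrite -(splitK (xi _ (pairR n0 b0))) E.
  by have := Ha0 i; rewrite -(splitK (xi _ (pairL n a0))) /pairR E eqxx.
- move=> m k b t [j e]; exists j; rewrite /zeta e splitR (fwd _ _ _ t _ e) splitR; by split.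
Qed.

Section Free.
Variable S : h1cond.
Definition pr n := {s : h1_sym S & {ffun 'I_(h1_ar s) -> 'I_n}}.
Definition sat_ids (A : Type) (F : forall s : h1_sym S, op A (h1_ar s)) : Prop :=
  forall i (x : 'I_(h1_nv i) -> A),
    F (h1_lf i) (fun j => x (h1_lpi j)) = F (h1_rf i) (fun j => x (h1_rpi j)).
Definition ev (A : Type) (F : forall s : h1_sym S, op A (h1_ar s)) n (p : pr n) (x : 'I_n -> A) :=
  F (tag p) (fun j => x (tagged p j)).
Definition eqv n (p q : pr n) : Prop :=
  forall (A : Type) (F : forall s : h1_sym S, op A (h1_ar s)), sat_ids F ->
  forall x, ev F p x = ev F q x.
Definition rep n (p : pr n) : pr n := odflt p [pick q | `[< eqv q p >] ].
Lemma rep_eqv n (p : pr n) : eqv (rep p) p.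
Proof.
rewrite /rep; case: pickP => [q /asboolP //|/= H].
by move=> *.
Qed.
Lemma rep_eq n (p q : pr n) : eqv p q -> rep p = rep q.
Proof.
move=> pq; rewrite /rep (@eq_pick _ _ (fun r => `[< eqv r q >])); last first.
  move=> r /=; apply/asboolP/asboolP => H A F hF x; rewrite H //; by rewrite pq.
case: pickP => //= H; have := H q; by move/asboolP; case.
Qed.
Definition fmnr n m (p : pr n) (s : 'I_n -> 'I_m) : pr m :=
  rep (Tagged (fun s => {ffun 'I_(h1_ar s) -> 'I_m}) [ffun j => s (tagged p j)]).
Lemma ev_tag A F n m (p : pr n) (s : 'I_n -> 'I_m) x :
  @ev A F m (Tagged (fun s => {ffun 'I_(h1_ar s) -> 'I_m}) [ffun j => s (tagged p j)]) x
  = ev F p (fun i => x (s i)).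
Proof.
rewrite /ev /=; congr F; apply: functional_extensionality => j.
by rewrite ffunE.
Qed.
Lemma ev_fmnr A F n m (p : pr n) (s : 'I_n -> 'I_m) x : @sat_ids A F ->
  ev F (fmnr p s) x = ev F p (fun i => x (s i)).
Proof. by move=> hF; rewrite /fmnr rep_eqv // ev_tag. Qed.
Lemma fmnr_comp n m k (a : pr n) (s : 'I_n -> 'I_m) (t : 'I_m -> 'I_k) :
  fmnr (fmnr a s) t = fmnr a (fun i => t (s i)).
Proof.
rewrite {1}/fmnr; apply: rep_eq => A F hF x.
by rewrite ev_tag (@ev_tag A F n k a (fun i => t (s i))) ev_fmnr.
Qed.
Definition Fmin : minion := @Minion (fun n => pr n) fmnr fmnr_comp.

Definition gen (s : h1_sym S) : pr (h1_ar s) :=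
  Tagged (fun s0 => {ffun 'I_(h1_ar s0) -> 'I_(h1_ar s)}) ([ffun j => j] : {ffun 'I_(h1_ar s) -> 'I_(h1_ar s)}).
Lemma gen_id i : fmnr (gen (h1_lf i)) (@h1_lpi S i) = fmnr (gen (h1_rf i)) (@h1_rpi S i).
Proof.
apply: rep_eq => A F hF x; rewrite /ev /=.
have := hF i x => E.
transitivity (F (h1_lf i) (fun j => x (h1_lpi j))).
  by congr F; apply: functional_extensionality => j; rewrite !ffunE.
rewrite E; by congr F; apply: functional_extensionality => j; rewrite !ffunE.
Qed.
End Free.

Definition pcompat (S : h1cond) (k : forall s : h1_sym S, option 'I_(h1_ar s)) :=
  forall i : h1_id S, match k (h1_lf i), k (h1_rf i) with
   | Some j, Some j' => h1_lpi j = h1_rpi j' | None, None => True | _, _ => False end.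
Definition NTc (S : h1cond) (s0 : h1_sym S) :=
  forall k, @pcompat S k -> k s0 = None.

Lemma CNT_Fmin S s0 : @NTc S s0 -> CNT (Fmin S).
Proof.
move=> NT; exists (h1_ar s0), (gen s0) => Q zeta fwd bwd Q0 Hz.
pose k s := if pselect (Q _ (gen s)) then zeta _ (gen s) else None.
have pk : pcompat k.
  move=> i; rewrite /k; case: pselect => ql; case: pselect => qr //.
  - have [j [e1 e2]] := Hz _ _ _ (@h1_lpi S i) ql.
    have [j' [e1' e2']] := Hz _ _ _ (@h1_rpi S i) qr.
    rewrite e1 e1'; move: e2 e2'; rewrite /= gen_id => ->; by case.
  - exfalso; apply: qr; apply: (bwd _ _ _ (@h1_rpi S i)); have := fwd _ _ _ (@h1_lpi S i) ql.
    by rewrite /= gen_id.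
  - exfalso; apply: ql; apply: (bwd _ _ _ (@h1_lpi S i)); have := fwd _ _ _ (@h1_rpi S i) qr.
    by rewrite /= gen_id.
have := NT k pk; rewrite /k; case: pselect => // q0.
by have [j [-> _]] := Hz _ _ _ (fun j => j) Q0.
Qed.

Lemma NT_NTc S : ~ h1_trivial S -> exists s0, @NTc S s0.
Proof.
move=> hNT; case: (pselect (exists s0, @NTc S s0)) => // H; exfalso; apply: hNT.
have Hs : forall s0 : h1_sym S, exists k : forall s : h1_sym S, option 'I_(h1_ar s), pcompat k /\ k s0 != None.
  move=> s0; case: (pselect (exists k, pcompat k /\ k s0 != None)) => // H'.
  exfalso; apply: H; exists s0 => k pk; case: (eqVneq (k s0) None) => // ne.
  by exfalso; apply: H'; exists k.
have G : forall (N : nat) (k : forall s : h1_sym S, option 'I_(h1_ar s)), pcompat k ->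
    #|[pred s | k s == None]| <= N -> exists k' : forall s : h1_sym S, option 'I_(h1_ar s), pcompat k' /\ forall s, k' s != None.
  elim=> [|N IH] k pk.
    rewrite leqn0 => /eqP/card0_eq E; exists k; split => // s.
    by move: (E s); rewrite !inE => ->.
  move=> hc; case: (pselect (exists s, k s = None)) => [[s ks]|nos]; last first.
    exists k; split => // s; apply/eqP => e; apply: nos; by exists s.
  have [ks' [pks' ks's]] := Hs s.
  pose k2 t := if k t is Some j then Some j else ks' t.
  apply: (IH k2).
    move=> i; move: (pk i) (pks' i); rewrite /k2.
    by case: (k (h1_lf i)) => [j|]; case: (k (h1_rf i)) => [j'|].
  rewrite -ltnS; apply: leq_trans hc; apply: proper_card; apply/properP; split.
    by apply/subsetP => t; rewrite !inE /k2; case: (k t).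
  by exists s; rewrite !inE /k2 ks // eqxx.
have [k' [pk' tk']] := G _ (fun _ => None) (fun i => I) (leqnn _).
have ex : forall s, exists j, k' s = Some j.
  by move=> s; move: (tk' s); case: (k' s) => // j _; exists j.
pose kk s := projT1 (cid (ex s)).
move=> A C; exists (fun s (x : 'I_(h1_ar s) -> A) => x (kk s)); split.
  by move=> s; apply: cl_proj.
move=> i x /=; have := pk' i.
by rewrite (projT2 (cid (ex (h1_lf i)))) (projT2 (cid (ex (h1_rf i)))) /kk => ->.
Qed.

Definition Snull : h1cond :=
  @H1cond (unit : finType) (fun _ => 0) (void : finType) (fun _ => 0)
    (fun i => match i with end) (fun i => match i with end)
    (fun i => match i with end) (fun i => match i with end).
Lemma Snull_NT : exists s0, @NTc Snull s0.
Proof. by exists tt => k _; case: (k tt) => // [[]]. Qed.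

Lemma sat_from_T S (G : h1graph) : graph_hom G (Tgraph (Fmin S)) -> h1_implies S (SigmaG G).
Proof.
move=> [h hh] A C [F [Fm hF]].
pose phi n (u : pr S n) : op A n := fun x => ev F u x.
have phim : forall n u, cl_mem C (phi n u).
  move=> n u; exact: (cl_comp (Fm (tag u)) (fun j => cl_proj C (tagged u j))).
have phimnr : forall n m (u : pr S n) (s : 'I_n -> 'I_m) x, phi m (fmnr u s) x = phi n u (fun i => x (s i)).
  by move=> n m u s x; rewrite /phi ev_fmnr.
have Hw : forall e : edgeT G, exists w : pr S 6,
    h (val e).1 = fmnr w (pat true) /\ h (val e).2 = fmnr w (pat false).
  by move=> e; have := hh _ _ (valP e); move/asboolP.
pose wit e := projT1 (cid (Hw e)).
pose F' := fun s : sigG_sym G => match s as s0 return op A (sigG_ar s0) with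
   | inl v => phi 3 (h v) | inr e => phi 6 (wit e) end.
exists F'; split.
  by case=> [v|e]; apply: phim.
move=> [e b] x; have [e1 e2] := projT2 (cid (Hw e)).
have xE : forall x : 'I_3 -> A, (fun j : 'I_3 => x (inord j)) = x.
  by move=> y; apply: functional_extensionality => j; rewrite inord_val.
move: x; case: b => x /=.
  change (phi 3 (h (sval e).1) (fun j : 'I_3 => x (inord j)) = phi 6 (wit e) (fun j => x (pat true j))).
  by rewrite xE e1 phimnr.
change (phi 3 (h (sval e).2) (fun j : 'I_3 => x (inord j)) = phi 6 (wit e) (fun j => x (pat false j))).
by rewrite xE e2 phimnr.
Qed.

Lemma hom_trans (G1 G2 G3 : h1graph) : graph_hom G1 G2 -> graph_hom G2 G3 -> graph_hom G1 G3.
Proof. move=> [f hf] [g hg]; exists (fun x => g (f x)) => x y e; exact/hg/hf. Qed.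

Definition code := (nat * seq (nat * nat))%type.
Definition gcrel (c : code) : rel 'I_c.1 :=
  fun x y => ((x : nat, y : nat) \in c.2) || ((y : nat, x : nat) \in c.2).
Arguments gcrel : clear implicits.
Lemma gcrel_sym (c : code) : symmetric (gcrel c).
Proof. by move=> x y; rewrite /gcrel orbC. Qed.
Arguments gcrel_sym : clear implicits.
Definition gcg (c : code) : h1graph := H1Graph (gcrel_sym c).
Definition gcode (k : nat) : h1graph := gcg (odflt (0, [::]) (unpickle k)).

Lemma copy (G : h1graph) : exists c : code, graph_hom G (gcg c) /\ graph_hom (gcg c) G.
Proof.
exists (#|gV G|, [seq (nat_of_ord (enum_rank p.1), nat_of_ord (enum_rank p.2)) |
                   p <- enum [pred p : (gV G * gV G)%type | gE p.1 p.2]]); split.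
  exists (fun x => enum_rank x) => x y e; apply/orP; left; apply/mapP; exists (x, y) => //.
  by rewrite mem_enum inE.
exists (fun a => enum_val a) => a b /orP [] /mapP [[u v]]; rewrite mem_enum inE /= => huv [ea eb].
  have -> : a = enum_rank u by apply: val_inj.
  have -> : b = enum_rank v by apply: val_inj.
  by rewrite !enum_rankK.
have -> : a = enum_rank v by apply: val_inj.
have -> : b = enum_rank u by apply: val_inj.
by rewrite !enum_rankK gE_sym.
Qed.

Definition Psel (G : h1graph) :=
  exists S : h1cond, (exists s0, @NTc S s0) /\ graph_hom (Tgraph (Fmin S)) G.
Definition pickcond (G : h1graph) : h1cond :=
  match pselect (Psel G) with left H => projT1 (cid H) | right _ => Snull end.
Lemma pickcond_NT G : exists s0, @NTc (pickcond G) s0.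
Proof.
rewrite /pickcond; case: pselect => [H|_]; last exact: Snull_NT.
by case: (projT2 (cid H)).
Qed.
Lemma pickcond_hom G : Psel G -> graph_hom (Tgraph (Fmin (pickcond G))) G.
Proof.
move=> P; rewrite /pickcond; case: pselect => [H|//].
by case: (projT2 (cid H)).
Qed.

Definition Nm k := Fmin (pickcond (gcode k)).
Fixpoint Mch n := match n with 0 => Nm 0 | n'.+1 => prodM (Mch n') (Nm n) end.

Lemma Nm_CNT k : CNT (Nm k).
Proof. have [s0 h] := pickcond_NT (gcode k); exact: CNT_Fmin h. Qed.

Lemma Mch_notP n : ~ toP (Mch n).
Proof.
elim: n => [|n IH] /=; first exact: CNT_notP (Nm_CNT 0).
by move=> P; apply: IH; apply: bin P (Nm_CNT _).
Qed.

Lemma Mch_Nm k : graph_hom (Tgraph (Mch k)) (Tgraph (Nm k)).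
Proof. case: k => [|k] /=; first by exists id. exact: T_snd. Qed.

Theorem lemma3p7 :
  exists H : nat -> h1graph,
    (forall n, 1 <= n -> ~ three_colorable (H n)) /\
    (forall n, 1 <= n -> graph_hom (H n.+1) (H n)) /\
    (forall S : h1cond, ~ h1_trivial S ->
       exists n, 1 <= n /\ h1_implies S (SigmaG (H n))).
Proof.
exists (fun n => Tgraph (Mch n)); split; [|split].
- by move=> n _ /T_col; apply: Mch_notP.
- by move=> n _; apply: T_fst.
move=> S hNT; have [s0 hs0] := NT_NTc hNT.
have [c [h1 h2]] := copy (Tgraph (Fmin S)).
pose k := pickle c.
have gk : gcode k = gcg c by rewrite /gcode /k pickleK.
have Ps : Psel (gcode k) by exists S; split; [exists s0 | rewrite gk].
have hk := pickcond_hom Ps.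
exists k.+1; split => //; apply: sat_from_T.
apply: (hom_trans (T_fst _ _)); apply: (hom_trans (Mch_Nm k)).
apply: (hom_trans hk); by rewrite gk.
Qed.
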